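(* Let $n\ge2$ and let $U^+$ be the subalgebra of $U_{r,s}(\mathfrak{so}_{2n+1})$ generated by $e_1,\dots,e_n$, with root vectors $\mathcal E_{i,j},\mathcal E_{i,j'}$ as in the context. Then in $U^+$: (1) $\mathcal E_{i,j}\mathcal E_{k,l}=\mathcal E_{k,l}\mathcal E_{i,j}$ for $i\le j$, $j+1<k\le l\le n$; (2) $\mathcal E_{i,j}\mathcal E_{k,l'}=\mathcal E_{k,l'}\mathcal E_{i,j}$ for $i\le j$, $j+1<k<l\le n$; (3) $\mathcal E_{i,j}=\mathcal E_{i,l-1}\mathcal E_{l,j}-r^2\mathcal E_{l,j}\mathcal E_{i,l-1}$ for $i<l\le j\le n$; (4) $\mathcal E_{i,j'}=\mathcal E_{i,l-1}\mathcal E_{l,j'}-r^2\mathcal E_{l,j'}\mathcal E_{i,l-1}$ for $i<l<j\le n$.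
   Context: Let $r,s\in\mathbb C^*$ with $r^3\ne s^3$, $r^4\ne s^4$, $\mathbb K=\mathbb Q(r,s)$. $U_{r,s}(\mathfrak{so}_{2n+1})$ is the $\mathbb K$-algebra generated by $e_i,f_i,\omega_i^{\pm1},\omega_i'^{\pm1}$ ($1\le i\le n$) with: $\omega$'s commute, invertible; $\omega_je_i\omega_j^{-1}=\langle\omega_i',\omega_j\rangle e_i$, $\omega_jf_i\omega_j^{-1}=\langle\omega_i',\omega_j\rangle^{-1}f_i$, $\omega_j'e_i\omega_j'^{-1}=\langle\omega_j',\omega_i\rangle^{-1}e_i$, $\omega_j'f_i\omega_j'^{-1}=\langle\omega_j',\omega_i\rangle f_i$, where $\langle\omega_i',\omega_i\rangle=r^2s^{-2}$ ($i<n$), $\langle\omega_n',\omega_n\rangle=rs^{-1}$, $\langle\omega_i',\omega_{i+1}\rangle=r^{-2}$, $\langle\omega_{i+1}',\omega_i\rangle=s^2$ ($i<n$), others $1$; $e_if_j-f_je_i=\delta_{ij}(\omega_i-\omega_i')/(r_i-s_i)$ ($r_i=r^2,s_i=s^2$ for $i<n$; $r_n=r,s_n=s$); Serre relations $(\mathrm{ad}_le_i)^{1-a_{ij}}(e_j)=0=(\mathrm{ad}_rf_i)^{1-a_{ij}}(f_j)$, $i\ne j$, with $(a_{ij})$ the $B_n$ Cartan matrix ($a_{ii}=2$, $a_{i,i+1}=a_{i+1,i}=-1$ for $i\le n-2$, $a_{n-1,n}=-1$, $a_{n,n-1}=-2$, else $0$), $\mathrm{ad}_l(a)(b)=\sum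 a_{(1)}bS(a_{(2)})$, $\mathrm{ad}_r(a)(b)=\sum S(a_{(1)})ba_{(2)}$, for the Hopf structure $\Delta(\omega)=\omega\otimes\omega$, $\Delta(e_i)=e_i\otimes1+\omega_i\otimes e_i$, $\Delta(f_i)=1\otimes f_i+f_i\otimes\omega_i'$, $S(e_i)=-\omega_i^{-1}e_i$, $S(f_i)=-f_i\omega_i'^{-1}$. (In $U^+$ the Serre relations amount to: $e_ie_j=e_je_i$ for $|i-j|>1$, $e_i\mathcal E_{i,i+1}=s^2\mathcal E_{i,i+1}e_i$ for $i<n$, $\mathcal E_{j,j+1}e_{j+1}=s^2e_{j+1}\mathcal E_{j,j+1}$ for $j<n-1$, $\mathcal E_{n-1,n'}e_n=s^2e_n\mathcal E_{n-1,n'}$.) Root vectors: $\mathcal E_{i,i}=e_i$, $\mathcal E_{i,j}=e_i\mathcal E_{i+1,j}-r^2\mathcal E_{i+1,j}e_i$ ($1\le i<j\le n$), $\mathcal E_{i,n'}=\mathcal E_{i,n}e_n-rs\,e_n\mathcal E_{i,n}$ ($i\le n-1$), $\mathcal E_{i,j'}=\mathcal E_{i,(j+1)'}e_j-s^{-2}e_j\mathcal E_{i,(j+1)'}$ ($1\le i<j\le n-1$). *)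

(* Defs.v *)
From mathcomp Require Import all_boot all_algebra.
Set Implicit Arguments. Unset Strict Implicit. Unset Printing Implicit Defensive.
Import GRing.Theory.
Local Open Scope ring_scope.

(* Root vectors of U^+ of U_{r,s}(so_{2n+1}), computed from the images
   e i (1 <= i <= n) of the generators in an F-algebra A. *)

(* rvE_aux r e d i = E_{i,i+d} *)
Fixpoint rvE_aux (F : fieldType) (A : algType F) (r : F) (e : nat -> A)
    (d i : nat) : A :=
  match d with
  | 0 => e i
  | d'.+1 => e i * rvE_aux r e d' i.+1 - r ^+ 2 *: (rvE_aux r e d' i.+1 * e i)
  end.

Definition rvE (F : fieldType) (A : algType F) (r : F) (e : nat -> A)
    (i j : nat) : A := rvE_aux r e (j - i)%N i.

(* rvEp_aux n r s e m i = E_{i,(n-m)'} *)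
Fixpoint rvEp_aux (F : fieldType) (A : algType F) (n : nat) (r s : F)
    (e : nat -> A) (m i : nat) : A :=
  match m with
  | 0 => rvE r e i n * e n - (r * s) *: (e n * rvE r e i n)
  | m'.+1 =>
      let j := (n - m'.+1)%N in
      rvEp_aux n r s e m' i * e j - s ^-2 *: (e j * rvEp_aux n r s e m' i)
  end.

(* E_{i,j'} for i < j <= n (and i <= n-1 when j = n) *)
Definition rvEp (F : fieldType) (A : algType F) (n : nat) (r s : F)
    (e : nat -> A) (i j : nat) : A := rvEp_aux n r s e (n - j)%N i.

Definition serre_Bn (F : fieldType) (A : algType F) (n : nat) (r s : F)
    (e : nat -> A) : Prop :=
  [/\ (forall i j : nat, (1 <= i)%N -> (j <= n)%N -> (i.+1 < j)%N ->
         e i * e j = e j * e i),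
      (forall i : nat, (1 <= i)%N -> (i < n)%N ->
         e i * rvE r e i i.+1 = s ^+ 2 *: (rvE r e i i.+1 * e i)),
      (forall j : nat, (1 <= j)%N -> (j.+1 < n)%N ->
         rvE r e j j.+1 * e j.+1 = s ^+ 2 *: (e j.+1 * rvE r e j j.+1))
    & rvEp n r s e n.-1 n * e n = s ^+ 2 *: (e n * rvEp n r s e n.-1 n)].

(* Main.v *)
Require Import Defs.
From mathcomp Require Import all_boot all_algebra.
From mathcomp Require Import zify.
Import GRing.Theory.
Local Open Scope ring_scope.

Lemma swap4 (A : zmodType) (x y z w : A) : x - y - (z - w) = x - z - (y - w).
Proof.
rewrite !opprB !addrA -!addrA; congr (_ + _).
by rewrite (addrCA (- z) w (- y)) (addrCA (- y) w (- z)) (addrC (- z)).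
Qed.

Lemma qid (F : fieldType) (A : algType F) (a B c : A) (q1 q2 : F) : a*c = c*a ->
 (a*B - q1*:(B*a))*c - q2*:(c*(a*B - q1*:(B*a))) = a*(B*c - q2*:(c*B)) - q1*:((B*c - q2*:(c*B))*a).
Proof.
move=> H.
rewrite !(mulrBl, mulrBr, scalerBr, =^~ scalerAl, =^~ scalerAr, mulrA, scalerA).
rewrite -(mulrA B a c) H -(mulrA c a B) -H !mulrA -(mulrA B c a) -H !mulrA (mulrC q2 q1).
exact: swap4.
Qed.

Section S.
Variables (F : fieldType) (r s : F) (n : nat) (A : algType F) (e : nat -> A).

Definition cm (x y : A) := x * y = y * x.

Lemma cm_sym x y : cm x y -> cm y x. Proof. by []. Qed.

Lemma cmM x a b : cm x a -> cm x b -> cm x (a * b).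
Proof. by rewrite /cm => ha hb; rewrite mulrA ha -mulrA hb mulrA. Qed.

Lemma cmB x a b (q : F) : cm x a -> cm x b -> cm x (a - q *: b).
Proof.
by rewrite /cm => ha hb; rewrite mulrBr mulrBl -scalerAr -scalerAl ha hb.
Qed.

Lemma cm_aux x d : forall i, (forall t, (i <= t <= i + d)%N -> cm x (e t)) ->
  cm x (rvE_aux r e d i).
Proof.
elim: d => [|d IH] i H /=.
  by apply: H; rewrite addn0 leqnn.
have h1 : cm x (e i) by apply: H; rewrite leqnn leq_addr.
have h2 : cm x (rvE_aux r e d i.+1).
  by apply: IH => t /andP [h3 h4]; apply: H; apply/andP; split; lia.
by apply: cmB; apply: cmM.
Qed.

Lemma cm_rvE x i j : (i <= j)%N -> (forall t, (i <= t <= j)%N -> cm x (e t)) ->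
  cm x (rvE r e i j).
Proof.
move=> hij H; apply: cm_aux => t ht; apply: H; rewrite subnKC // in ht.
Qed.

Lemma cm_auxp x m : forall i, (i <= n)%N -> (m <= n - i)%N ->
  (forall t, (i <= t <= n)%N -> cm x (e t)) -> cm x (rvEp_aux n r s e m i).
Proof.
elim: m => [|m IH] i hin hm H /=.
  have h := @cm_rvE x i n hin H.
  by apply: cmB; apply: cmM => //; apply: H; rewrite hin leqnn.
have h2 := IH i hin (ltnW hm) H.
have h1 : cm x (e (n - m.+1)) by apply: H; apply/andP; split; lia.
by apply: cmB; apply: cmM.
Qed.

Lemma rvE_ii i : rvE r e i i = e i.
Proof. by rewrite /rvE subnn. Qed.

Lemma rvE_rec i j : (i < j)%N ->
  rvE r e i j = e i * rvE r e i.+1 j - r ^+ 2 *: (rvE r e i.+1 j * e i).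
Proof.
move=> h; rewrite /rvE.
have -> : (j - i = (j - i.+1).+1)%N by lia.
by [].
Qed.

Lemma rvEp_n i : rvEp n r s e i n = rvE r e i n * e n - (r * s) *: (e n * rvE r e i n).
Proof. by rewrite /rvEp subnn. Qed.

Lemma rvEp_rec i j : (j < n)%N ->
  rvEp n r s e i j = rvEp n r s e i j.+1 * e j - s ^-2 *: (e j * rvEp n r s e i j.+1).
Proof.
move=> h; rewrite /rvEp.
have -> : (n - j = (n - j.+1).+1)%N by lia.
rewrite /=.
have -> : (n - (n - j.+1).+1 = j)%N by lia.
by [].
Qed.

End S.
Arguments cm {F A}.
Arguments cm_rvE {F r A e}.
Arguments cm_auxp {F r s n A e}.
Arguments rvE_ii {F r A e}.
Arguments rvE_rec {F r A e}.
Arguments rvEp_n {F r s n A e}.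
Arguments rvEp_rec {F r s n A e}.

Theorem lemma3p1 (F : fieldType) (r s : F) (n : nat) (A : algType F)
    (e : nat -> A) :
  [pchar F] =i pred0 ->
  r != 0 -> s != 0 -> r ^+ 3 != s ^+ 3 -> r ^+ 4 != s ^+ 4 ->
  (2 <= n)%N ->
  serre_Bn n r s e ->
  [/\ (forall i j k l : nat, (1 <= i)%N -> (i <= j)%N -> (j.+1 < k)%N ->
         (k <= l)%N -> (l <= n)%N ->
         rvE r e i j * rvE r e k l = rvE r e k l * rvE r e i j),
      (forall i j k l : nat, (1 <= i)%N -> (i <= j)%N -> (j.+1 < k)%N ->
         (k < l)%N -> (l <= n)%N ->
         rvE r e i j * rvEp n r s e k l = rvEp n r s e k l * rvE r e i j),
      (forall i l j : nat, (1 <= i)%N -> (i < l)%N -> (l <= j)%N -> (j <= n)%N ->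
         rvE r e i j = rvE r e i l.-1 * rvE r e l j
                         - r ^+ 2 *: (rvE r e l j * rvE r e i l.-1))
    & (forall i l j : nat, (1 <= i)%N -> (i < l)%N -> (l < j)%N -> (j <= n)%N ->
         rvEp n r s e i j = rvE r e i l.-1 * rvEp n r s e l j
                         - r ^+ 2 *: (rvEp n r s e l j * rvE r e i l.-1))].
Proof.
move=> _ _ _ _ _ _ [Sa _ _ _].
have ee : forall t m, (1 <= t)%N -> (t.+1 < m)%N -> (m <= n)%N -> cm (e t) (e m).
  by move=> t m h1 h2 h3; apply: Sa.
have Em : forall i j m, (1 <= i)%N -> (i <= j)%N -> (j.+1 < m)%N -> (m <= n)%N ->
    cm (rvE r e i j) (e m).
  move=> i j m h1 h2 h3 h4; apply: cm_sym; apply: cm_rvE => // t /andP[t1 t2].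
  by apply: cm_sym; apply: ee; lia.
have P3 : forall i l j, (1 <= i)%N -> (i < l)%N -> (l <= j)%N -> (j <= n)%N ->
         rvE r e i j = rvE r e i l.-1 * rvE r e l j
                         - r ^+ 2 *: (rvE r e l j * rvE r e i l.-1).
  move=> i l j hi hil hlj hjn.
  move: {2}(l - i)%N (erefl (l - i)%N) => d; elim: d i hi hil => [|d IH] i hi hil hd.
    lia.
  case: d IH hd => [|d] IH hd.
    have -> : l = i.+1 by lia.
    by rewrite /= rvE_ii rvE_rec //; lia.
  rewrite (rvE_rec i j); last by lia.
  rewrite (IH i.+1) //; try lia.
  rewrite (rvE_rec i l.-1); last by lia.
  symmetry; apply: qid.
  rewrite ?rvE_ii.
  by apply: cm_rvE => // t /andP[t1 t2]; apply: ee; lia.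
split.
- move=> i j k l h1 h2 h3 h4 h5.
  apply: cm_rvE => // t /andP[t1 t2]; apply: Em; lia.
- move=> i j k l h1 h2 h3 h4 h5.
  apply: cm_auxp; try lia.
  move=> t /andP[t1 t2]; apply: Em; lia.
- exact: P3.
move=> i l j hi hil hlj hjn.
move: {2}(n - j)%N (erefl (n - j)%N) => m; elim: m j hlj hjn => [|m IH] j hlj hjn hm.
  have ej : j = n by lia.
  subst j.
  rewrite !rvEp_n (P3 i l n) //; last by lia.
  apply: qid; apply: Em; lia.
rewrite (rvEp_rec i j) ?(rvEp_rec l j); try lia.
rewrite (IH j.+1); try lia.
apply: qid; apply: Em; lia.
Qed.
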